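(* Let $N\geq 4$ and let $\Gamma$ be the graph obtained from the cycle graph $C_N$ by adding one edge (a chord) $\{n,m\}$ between two vertices that are not adjacent in $C_N$. Then $\mathcal C^N(\Gamma)=0$. (Consequently, under the entropy model $S(Q)=\alpha L(Q)-J(Q)\log\mathcal D$ the $N$-partite information of the whole collection vanishes, while each of the two cycles created by the chord, if it has at least $3$ vertices, is itself a cycle graph for which $\mathcal C=2(-1)^{p-1}$, $p$ its number of vertices.)
   Context: Let $\Gamma$ be a finite simple graph with vertex set $[N]$ (vertices model planar subsystems, edges model shared walls/handles, each cycle encloses a hole). For nonempty $Q\subseteq[N]$ let $\Gamma[Q]$ be the induced subgraph, $c(Q)$ its number of connected components, $e(Q)$ its number of edges, $b_1(Q)=e(Q)-|Q|+c(Q)$. Define $J(Q)=c(Q)+b_1(Q)$ (number of boundary components of the union of the subsystems in $Q$) and $\mathcal C^N(\Gamma)=\sum_{\emptyset\neq Q\subseteq[N]}(-1)^{|Q|-1}J(Q)$. $C_N$ has edges $\{i,i+1\bmod N\}$. *)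

(* Defs.v *)
From mathcomp Require Import all_boot all_order all_algebra.
Set Implicit Arguments. Unset Strict Implicit. Unset Printing Implicit Defensive.
Import GRing.Theory Num.Theory.

(* A finite simple graph on vertex set [N] = 'I_N is given by a
   symmetric irreflexive adjacency relation. *)

Definition induced_rel N (adj : rel 'I_N) (Q : {set 'I_N}) : rel 'I_N :=
  fun x y => [&& x \in Q, y \in Q & adj x y].

Definition ncomp N (adj : rel 'I_N) (Q : {set 'I_N}) : nat :=
  #|[set [set y in Q | connect (induced_rel adj Q) x y] | x in Q]|.

Definition nedges N (adj : rel 'I_N) (Q : {set 'I_N}) : nat :=
  #|[set p : 'I_N * 'I_N | [&& p.1 < p.2, p.1 \in Q, p.2 \in Q & adj p.1 p.2]]|.

Definition betti1 N (adj : rel 'I_N) (Q : {set 'I_N}) : int :=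
  (nedges adj Q)%:Z - (#|Q|)%:Z + (ncomp adj Q)%:Z.

Definition Jbd N (adj : rel 'I_N) (Q : {set 'I_N}) : int :=
  (ncomp adj Q)%:Z + betti1 adj Q.

Definition calC N (adj : rel 'I_N) : int :=
  \sum_(Q : {set 'I_N} | Q != set0) (-1) ^+ (#|Q|.-1) * Jbd adj Q.

Definition cycle_adj N : rel 'I_N :=
  fun i j => (val j == (val i).+1 %% N) || (val i == (val j).+1 %% N).

Definition chord_adj N (n m : 'I_N) : rel 'I_N :=
  fun i j => [|| cycle_adj i j, (i == n) && (j == m) | (i == m) && (j == n)].

(* Main.v *)
Require Import Defs.
From mathcomp Require Import all_boot all_order all_algebra.
Import GRing.Theory Num.Theory.
From mathcomp Require Import zify.
From Stdlib Require Import FunctionalExtensionality.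
Set Implicit Arguments. Unset Strict Implicit. Unset Printing Implicit Defensive.

Lemma connect_ind' (T : finType) (e : rel T) (P : T -> Prop) (x : T) :
  P x -> (forall a b, P a -> e a b -> P b) -> forall y, connect e x y -> P y.
Proof.
move=> Px H y /connectP [p]; elim: p x Px => [|a p IH] x Px /=.
  by move=> _ ->.
by move=> /andP [exa pa] Ey; exact: (IH a (H _ _ Px exa) pa Ey).
Qed.

Definition addE (T : finType) (e : rel T) (x y : T) : rel T :=
  fun a b => [|| e a b, (a == x) && (b == y) | (a == y) && (b == x)].

Definition cls N (e : rel 'I_N) (Q : {set 'I_N}) (z : 'I_N) :=
  [set w in Q | connect (induced_rel e Q) z w].

Lemma induced_sym N (e : rel 'I_N) Q : symmetric e -> symmetric (induced_rel e Q).
Proof. by move=> se a b; rewrite /induced_rel se andbCA. Qed.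

Lemma cls_eq N (e : rel 'I_N) Q z w : symmetric e ->
  w \in cls e Q z -> cls e Q w = cls e Q z.
Proof.
move=> se; rewrite inE => /andP [wQ czw]; apply/setP => v; rewrite !inE.
case: (v \in Q) => //=; apply/idP/idP => H.
  exact: connect_trans czw H.
by apply: connect_trans H; rewrite (sym_connect_sym (induced_sym Q se)).
Qed.

Lemma cls_self N (e : rel 'I_N) (Q : {set 'I_N}) z : z \in Q -> z \in cls e Q z.
Proof. by move=> zQ; rewrite inE zQ connect0. Qed.

Lemma connect_addE N (e : rel 'I_N) (Q : {set 'I_N}) x y z w :
  x \in Q -> y \in Q ->
  connect (induced_rel (addE e x y) Q) z w =
  [|| connect (induced_rel e Q) z w,
      connect (induced_rel e Q) z x && connect (induced_rel e Q) y w |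
      connect (induced_rel e Q) z y && connect (induced_rel e Q) x w].
Proof.
move=> xQ yQ.
set R := induced_rel e Q; set R' := induced_rel (addE e x y) Q.
have sub : forall a b, connect R a b -> connect R' a b.
  apply: connect_sub => a b Rab; apply: connect1.
  by move: Rab; rewrite /R /R' /induced_rel /addE => /and3P [-> -> ->].
have exy : R' x y by rewrite /R' /induced_rel /addE xQ yQ !eqxx orbT.
have eyx : R' y x by rewrite /R' /induced_rel /addE xQ yQ !eqxx !orbT.
apply/idP/idP.
  move: w; apply: connect_ind'; first by rewrite connect0.
  move=> a b Ha; rewrite /R' /induced_rel /addE => /and3P [aQ bQ].
  case/or3P => [eab | /andP [/eqP ax /eqP bx] | /andP [/eqP ay /eqP bx]].
  - have Rab : R a b by rewrite /R /induced_rel aQ bQ eab.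
    case/or3P: Ha => [H | /andP [H1 H2] | /andP [H1 H2]].
    + by rewrite (connect_trans H (connect1 Rab)).
    + by rewrite (connect_trans H2 (connect1 Rab)) H1 orbT.
    + by rewrite (connect_trans H2 (connect1 Rab)) H1 !orbT.
  - subst a b; case/or3P: Ha => [H | /andP [H1 H2] | /andP [H1 H2]].
    + by rewrite H connect0 orbT.
    + by rewrite H1 connect0 orbT.
    + by rewrite H1.
  - subst a b; case/or3P: Ha => [H | /andP [H1 H2] | /andP [H1 H2]].
    + by rewrite H connect0 !orbT.
    + by rewrite H1.
    + by rewrite H1 connect0 !orbT.
case/or3P => [H | /andP [H1 H2] | /andP [H1 H2]].
- exact: sub.
- exact: connect_trans (sub _ _ H1) (connect_trans (connect1 exy) (sub _ _ H2)).
- exact: connect_trans (sub _ _ H1) (connect_trans (connect1 eyx) (sub _ _ H2)).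
Qed.


Lemma ncomp_cls N (e : rel 'I_N) Q : ncomp e Q = #|cls e Q @: Q|.
Proof. by []. Qed.

Lemma ncomp_addE N (e : rel 'I_N) (Q : {set 'I_N}) x y : symmetric e ->
  ncomp (addE e x y) Q + [&& x \in Q, y \in Q & ~~ connect (induced_rel e Q) x y]
  = ncomp e Q.
Proof.
move=> se; rewrite !ncomp_cls.
set R := induced_rel e Q.
have csym : connect_sym R := sym_connect_sym (induced_sym Q se).
case: (boolP [&& x \in Q, y \in Q & ~~ connect R x y]) => [/and3P [xQ yQ nxy] | H]; last first.
  rewrite addn0.
  have E : [set cls (addE e x y) Q z | z in Q] = [set cls e Q z | z in Q].
    apply: eq_in_imset => z zQ; apply/setP => w.
    rewrite !inE; congr (_ && _); apply/idP/idP.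
      apply: connect_sub => a b; rewrite /induced_rel /addE => /and3P [aQ bQ].
      case/or3P => [eab | /andP [/eqP ax /eqP bx] | /andP [/eqP ay /eqP bx]].
      - by apply: connect1; rewrite /R /induced_rel aQ bQ eab.
      - subst a b; move: H; rewrite aQ bQ /= negbK; done.
      - subst a b; move: H; rewrite aQ bQ /= negbK csym; done.
    apply: connect_sub => a b Rab; apply: connect1.
    by move: Rab; rewrite /R /induced_rel /addE => /and3P [-> -> ->].
  by rewrite E.
rewrite addn1.
set Cx := cls e Q x; set Cy := cls e Q y.
have nyx : ~~ connect R y x by rewrite csym.
have clsE : forall z, z \in Q -> cls (addE e x y) Q z =
    if z \in Cx :|: Cy then Cx :|: Cy else cls e Q z.
  move=> z zQ; apply/setP => w; rewrite inE connect_addE // -/R.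
  case zx: (connect R x z).
    have Ez := same_connect csym zx.
    have -> : z \in Cx :|: Cy by rewrite !inE zQ zx.
    rewrite -!Ez connect0 (negbTE nxy) /= !inE.
    by case: (w \in Q) => //=; rewrite -/R; case: (connect R x w); case: (connect R y w).
  case zy: (connect R y z).
    have Ez := same_connect csym zy.
    have -> : z \in Cx :|: Cy by rewrite !inE zQ zy orbT.
    rewrite -!Ez connect0 (negbTE nyx) /= !inE.
    by case: (w \in Q) => //=; rewrite -/R; case: (connect R x w); case: (connect R y w).
  have -> : (z \in Cx :|: Cy) = false by rewrite !inE zQ zx zy.
  rewrite (csym z x) zx (csym z y) zy /= inE -/R.
  by case: (connect R z w); case: (w \in Q).
set P := [set cls e Q z | z in Q].
have xCx : x \in Cx by exact: cls_self.
have yCy : y \in Cy by exact: cls_self.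
have CxP : Cx \in P by apply: imset_f.
have CyP : Cy \in P by apply: imset_f.
have nCxy : Cx != Cy.
  apply/eqP => E; move: yCy; rewrite -E inE (negbTE nxy); by rewrite andbF.
have inCC : forall z, z \in Cx :|: Cy -> cls e Q z = Cx \/ cls e Q z = Cy.
  move=> z; rewrite inE => /orP [zC|zC]; [left|right]; exact: cls_eq.
have EP' : [set cls (addE e x y) Q z | z in Q] = (Cx :|: Cy) |: (P :\: [set Cx; Cy]).
  apply/setP => C; apply/imsetP/idP.
    case=> z zQ ->; rewrite clsE //; case: ifP => zC.
      by rewrite !inE eqxx.
    rewrite !inE; apply/orP; right; rewrite imset_f // andbT.
    apply/negP => /orP [] /eqP E; move: zC; rewrite inE -E (cls_self e zQ) //.
    by rewrite orbT.
  rewrite !inE => /orP [/eqP -> | /andP [nC /imsetP [z zQ EC]]].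
    by exists x => //; rewrite clsE // inE xCx.
  exists z => //; rewrite clsE //; case: ifP => zC //.
  by move: nC; case: (inCC z zC) => <-; rewrite -EC eqxx ?orbT.
have nin : (Cx :|: Cy) \notin P :\: [set Cx; Cy].
  rewrite !inE; apply/negP => /andP [nC /imsetP [z zQ EC]].
  have : x \in cls e Q z by rewrite -EC inE xCx.
  move/(cls_eq se) => E; move: nC; by rewrite EC -E /Cx eqxx.
have sP : [set Cx; Cy] \subset P by rewrite subUset !sub1set CxP CyP.
have le2 := subset_leq_card sP.
rewrite cards2 nCxy in le2.
rewrite EP' cardsU1 nin cardsD (setIidPr sP) cards2 nCxy.
move: le2; rewrite -/P; lia.
Qed.


Definition sg N (Q : {set 'I_N}) : int := ((-1) ^+ #|Q|)%R.

Definition tog N (z : 'I_N) (Q : {set 'I_N}) := if z \in Q then Q :\ z else z |: Q.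

Lemma togK N (z : 'I_N) : involutive (tog z).
Proof.
move=> Q; rewrite /tog; case: (boolP (z \in Q)) => zQ.
  by rewrite !inE eqxx /= setD1K.
by rewrite setU11 setU1K.
Qed.

Lemma altsum N (A : {set 'I_N}) : A != setT ->
  (\sum_(Q : {set 'I_N}) sg Q * (A \subset Q : nat)%:Z = 0)%R.
Proof.
move=> AT.
have : ~~ (setT \subset A) by rewrite subTset.
case/subsetPn => z _ zA.
set s := (\sum_Q _)%R.
have : s = (- s)%R.
  rewrite {1}/s (reindex_inj (can_inj (togK z))) /s -sumrN; apply: eq_bigr => Q _.
  have -> : (A \subset tog z Q) = (A \subset Q).
    rewrite /tog; case: ifP => zQ.
      apply/idP/idP => H; first exact: subset_trans H (subD1set _ _).
      by apply/subsetP => a aA; rewrite !inE (subsetP H _ aA) andbT;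
         apply: contraNneq zA => <-.
    apply/idP/idP => H; last exact: subset_trans H (subsetUr _ _).
    apply/subsetP => a aA; move: (subsetP H _ aA); rewrite !inE.
    by case/orP => // /eqP E; move: zA; rewrite -E aA.
  rewrite /sg /tog; case: ifP => zQ.
    rewrite -[in RHS](setD1K zQ) cardsU1 !inE eqxx /= add1n exprS.
    by rewrite setD1K // mulN1r mulNr opprK.
  by rewrite cardsU1 zQ /= add1n exprS mulN1r mulNr.
move=> H; lia.
Qed.

Lemma altsumW N (I : finType) (w : I -> int) (A : I -> {set 'I_N}) :
  (forall i, A i != setT) ->
  (\sum_(Q : {set 'I_N}) sg Q * \sum_i w i * (A i \subset Q : nat)%:Z = 0)%R.
Proof.
move=> HA.
under eq_bigr => Q _ do rewrite mulr_sumr.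
rewrite exchange_big /= big1 // => i _.
under eq_bigr => Q _ do rewrite mulrCA.
by rewrite -mulr_sumr altsum // mulr0.
Qed.

Lemma card_int (T : finType) (A : {pred T}) :
  (#|A|%:Z = \sum_x (x \in A : nat)%:Z)%R.
Proof.
rewrite -sum1_card (big_morph Posz PoszD (erefl _)) big_mkcond.
by apply: eq_bigr => x _; case: (x \in A).
Qed.

Lemma Jbd0 N (e : rel 'I_N) : Jbd e set0 = 0%R.
Proof.
have c0 : ncomp e set0 = 0%N by rewrite /ncomp imset0 cards0.
have e0 : nedges e set0 = 0%N.
  apply/eqP; rewrite /nedges cards_eq0; apply/eqP/setP => p.
  by rewrite !inE andbF.
by rewrite /Jbd /betti1 c0 e0 cards0.
Qed.

Lemma calC_G N (e : rel 'I_N) :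
  calC e = (- \sum_(Q : {set 'I_N}) sg Q * Jbd e Q)%R.
Proof.
rewrite [in RHS](bigD1 set0) //= Jbd0 mulr0 add0r -sumrN /calC.
apply: eq_bigr => Q nQ.
have : (0 < #|Q|)%N by rewrite card_gt0.
rewrite /sg; case: #|Q| => [//|k] _ /=.
by rewrite exprS mulN1r mulNr opprK.
Qed.

Lemma sumcard N : (2 <= N)%N ->
  (\sum_(Q : {set 'I_N}) sg Q * (#|Q|)%:Z = 0)%R.
Proof.
move=> N2.
rewrite -[RHS](@altsumW N 'I_N (fun _ => 1%R) (fun v => [set v])).
  apply: eq_bigr => Q _; rewrite card_int; congr (_ * _)%R.
  by apply: eq_bigr => v _; rewrite sub1set mul1r.
move=> v; apply/eqP => E.
have := cardsT 'I_N; rewrite -E cards1 card_ord; lia.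
Qed.

Lemma sumedges N (e : rel 'I_N) : (3 <= N)%N ->
  (\sum_(Q : {set 'I_N}) sg Q * (nedges e Q)%:Z = 0)%R.
Proof.
move=> N3.
rewrite -[RHS](@altsumW N ('I_N * 'I_N)%type
   (fun p => (((p.1 < p.2)%N && e p.1 p.2 : nat)%:Z)%R) (fun p => [set p.1; p.2])).
  apply: eq_bigr => Q _; rewrite /nedges card_int; congr (_ * _)%R.
  apply: eq_bigr => p _; rewrite inE subUset !sub1set.
  by case: (p.1 < p.2)%N; case: (p.1 \in Q); case: (p.2 \in Q); case: (e p.1 p.2).
move=> p; apply/eqP => E.
have := cardsT 'I_N; rewrite -E card_ord => H.
have := cards2 p.1 p.2; rewrite H; case: (p.1 != p.2) => /=; lia.
Qed.

Definition Gc N (e : rel 'I_N) := (\sum_(Q : {set 'I_N}) sg Q * (ncomp e Q)%:Z)%R.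

Lemma calC_Gc N (e : rel 'I_N) : (3 <= N)%N -> calC e = (- (2 * Gc e))%R.
Proof.
move=> N3; rewrite calC_G; congr (- _)%R.
transitivity (\sum_(Q : {set 'I_N}) (2 * (sg Q * (ncomp e Q)%:Z) + sg Q * (nedges e Q)%:Z
   - sg Q * (#|Q|)%:Z))%R.
  apply: eq_bigr => Q _; rewrite /Jbd /betti1.
  set a := ((ncomp e Q)%:Z)%R; set b := ((nedges e Q)%:Z)%R; set c := ((#|Q|)%:Z)%R.
  rewrite !mulrDr !mulrN mulrDl mul1r !addrA; lia.
rewrite sumrB big_split /= -mulr_sumr sumcard ?sumedges //; last lia.
by rewrite addr0 subr0.
Qed.


Lemma Gc_addE N (e : rel 'I_N) x y : symmetric e ->
  Gc (addE e x y) = (Gc e - \sum_(Q : {set 'I_N}) sg Q *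
     ([&& x \in Q, y \in Q & ~~ connect (induced_rel e Q) x y] : nat)%:Z)%R.
Proof.
move=> se; rewrite /Gc -sumrB; apply: eq_bigr => Q _; rewrite -mulrBr.
by rewrite -(ncomp_addE Q x y se) PoszD addrK.
Qed.

Lemma cond_split N (Q A I : {set 'I_N}) (x y : 'I_N) (c : bool) :
  A = [set x; y] -> A \subset I -> (x \in Q -> y \in Q -> c = (I \subset Q)) ->
  (([&& x \in Q, y \in Q & ~~ c] : nat)%:Z = (A \subset Q : nat)%:Z - (I \subset Q : nat)%:Z)%R.
Proof.
move=> -> AI Hc.
have xI : x \in I by apply: (subsetP AI); rewrite !inE eqxx.
have yI : y \in I by apply: (subsetP AI); rewrite !inE eqxx orbT.
rewrite subUset !sub1set.
case xQ: (x \in Q); last first.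
  by have -> : (I \subset Q) = false by apply/negP => /subsetP /(_ _ xI); rewrite xQ.
case yQ: (y \in Q); last first.
  by have -> : (I \subset Q) = false by apply/negP => /subsetP /(_ _ yI); rewrite yQ.
by rewrite (Hc xQ yQ) /=; case: (I \subset Q).
Qed.

Lemma corr_zero N (A I : {set 'I_N}) (f : {set 'I_N} -> nat) :
  A != setT -> I != setT ->
  (forall Q, (f Q)%:Z = (A \subset Q : nat)%:Z - (I \subset Q : nat)%:Z)%R ->
  (\sum_(Q : {set 'I_N}) sg Q * (f Q)%:Z = 0)%R.
Proof.
move=> AT IT Hf.
under eq_bigr => Q _ do rewrite Hf mulrBr.
by rewrite sumrB !altsum // subr0.
Qed.

Definition pathg N (k : nat) : rel 'I_N :=
  fun a b => (((b : nat) == (a : nat).+1) && ((b : nat) <= k)) || (((a : nat) == (b : nat).+1) && ((a : nat) <= k)).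

Lemma pathg_sym N k : symmetric (@pathg N k).
Proof. by move=> a b; rewrite /pathg orbC. Qed.

Lemma chain N (e : rel 'I_N) (Q : {set 'I_N}) (lo : 'I_N) (hi : nat) :
  (forall a b : 'I_N, lo <= a -> (b : nat) = (a : nat).+1 -> b <= hi -> e a b) ->
  (forall a : 'I_N, lo <= a <= hi -> a \in Q) ->
  forall b : 'I_N, lo <= b <= hi -> connect (induced_rel e Q) lo b.
Proof.
move=> He HQ b Hb.
have : forall d (b : 'I_N), (b : nat) = lo + d -> (b : nat) <= hi -> connect (induced_rel e Q) lo b.
  elim=> [|d IH] c Hc Hh.
    have -> : c = lo by apply: val_inj; rewrite /= Hc addn0.
    exact: connect0.
  have c'N : lo + d < N by have := ltn_ord c; lia.
  pose c' : 'I_N := Ordinal c'N.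
  apply: connect_trans (IH c' erefl _) (connect1 _) => /=; first lia.
  rewrite /induced_rel !HQ /=; try lia.
  apply: He => /=; lia.
move=> H; apply: (H (b - lo)); lia.
Qed.

Lemma pathg0_ncomp N (Q : {set 'I_N}) : ncomp (pathg 0) Q = #|Q|.
Proof.
rewrite ncomp_cls.
have E : {in Q, cls (pathg 0) Q =1 set1}.
  move=> z zQ; apply/setP => w; rewrite !inE.
  apply/andP/eqP => [[_ ]|->]; last by rewrite zQ connect0.
  move: w; apply: connect_ind' => // a b -> /and3P [_ _].
  rewrite /pathg; lia.
by rewrite (eq_in_imset E) card_imset //; exact: set1_inj.
Qed.

Lemma Gc_path N k : (3 <= N)%N -> k < N -> Gc (@pathg N k) = 0%R.
Proof.
move=> N3; elim: k => [|k IH] kN.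
  rewrite /Gc; under eq_bigr => Q _ do rewrite pathg0_ncomp.
  by apply: sumcard; lia.
have k0 : k < N by lia.
pose x : 'I_N := Ordinal k0.
pose y : 'I_N := Ordinal kN.
have -> : pathg k.+1 = addE (pathg k) x y.
  apply: FunctionalExtensionality.functional_extensionality => a.
  apply: FunctionalExtensionality.functional_extensionality => b.
  rewrite /addE /pathg -!val_eqE /=.
  apply/idP/idP; lia.
rewrite Gc_addE; last exact: pathg_sym.
rewrite (IH k0) sub0r.
have nc : forall Q, ~~ connect (induced_rel (pathg k) Q) x y.
  move=> Q; apply/negP => C.
  have : (y : nat) <= k.
    apply: (connect_ind' (P := fun w : 'I_N => (w : nat) <= k) _ _ C) => /=; first by rewrite /x /=.
    move=> a b Ha /and3P [_ _]; rewrite /pathg; lia.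
  rewrite /y /=; lia.
apply/eqP; rewrite oppr_eq0; apply/eqP.
rewrite -[RHS](@altsum N [set x; y]).
  apply: eq_bigr => Q _; rewrite nc andbT subUset !sub1set //.
apply/eqP => E.
have := cardsT 'I_N; rewrite -E card_ord cards2; case: (x != y) => /=; lia.
Qed.


Lemma addE_sym (T : finType) (e : rel T) x y : symmetric e -> symmetric (addE e x y).
Proof.
move=> se a b; rewrite /addE se; case: (e b a); case: (a == x); case: (a == y); case: (b == x); case: (b == y) => //.
Qed.

Lemma cut_lemma N (e : rel 'I_N) (Q : {set 'I_N}) (j s t : 'I_N) :
  j \notin Q -> (s : nat) < j ->
  (forall a b : 'I_N, (a : nat) < j -> e a b -> (b : nat) != j -> (b : nat) < j) ->
  connect (induced_rel e Q) s t -> (t : nat) < j.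
Proof.
move=> jQ sj H; move: t; apply: connect_ind' => // a b Ha /and3P [_ bQ eab].
apply: (H a b Ha eab); apply/eqP => E; move: jQ.
have jb : j = b by apply: val_inj; rewrite /= E.
by rewrite jb bQ.

Qed.

Lemma modS N (a : 'I_N) : (a : nat).+1 %% N = if (a : nat).+1 == N then 0 else (a : nat).+1.
Proof.
case: ifP => [/eqP ->|H]; first by rewrite modnn.
by rewrite modn_small //; have := ltn_ord a; move: H; lia.
Qed.

Lemma main_lt N (n m : 'I_N) : (4 <= N)%N -> (n : nat) < m -> (n : nat).+1 < m ->
  (0 < (n : nat)) || ((m : nat).+1 < N) -> calC (chord_adj n m) = 0%R.
Proof.
move=> N4 nm nm1 nm2.
have N1 : N.-1 < N by lia.
have N0 : 0 < N by lia.
pose xN : 'I_N := Ordinal N1.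
pose y0 : 'I_N := Ordinal N0.
pose p : rel 'I_N := pathg N.-1.
pose G1 := addE p n m.
pose G2 := addE G1 xN y0.
have psym : symmetric p by exact: pathg_sym.
have G1sym : symmetric G1 by exact: addE_sym.
have -> : chord_adj n m = G2.
  apply: functional_extensionality => a.
  apply: functional_extensionality => b.
  rewrite /G2 /G1 /p /chord_adj /cycle_adj /addE /pathg -!val_eqE /= !modS.
  have := ltn_ord a; have := ltn_ord b.
  move=> Hb Ha; case: ifP => H1; case: ifP => H2; apply/idP/idP; lia.
rewrite calC_Gc; last lia.
rewrite /G2 Gc_addE // /G1 Gc_addE // /p Gc_path; try lia.
have S1 : (\sum_(Q : {set 'I_N}) sg Q *
    ([&& n \in Q, m \in Q & ~~ connect (induced_rel (pathg N.-1) Q) n m] : nat)%:Z = 0)%R.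
  apply: (@corr_zero N [set n; m] [set j : 'I_N | (n <= j) && (j <= m)]).
  - apply/eqP => E.
    have := cardsT 'I_N; rewrite -E card_ord cards2; case: (n != m) => /=; lia.
  - apply/eqP => E.
    have Hy := in_setT y0; have Hx := in_setT xN.
    rewrite -E !inE /= in Hy Hx; lia.
  move=> Q; apply: cond_split => //.
    by rewrite subUset !sub1set !inE leqnn (ltnW nm) leqnn.
  move=> nQ mQ; apply/idP/idP => [C|H].
    apply/subsetP => j; rewrite inE => /andP [nj jm]; apply/negPn/negP => jQ.
    have : n != j by apply/eqP => E; move: jQ; rewrite -E nQ.
    rewrite -val_eqE /= => nj2.
    have nj' : (n : nat) < j by lia.
    have : (m : nat) < j.
      apply: (cut_lemma jQ nj' _ C) => a b aj; rewrite /pathg; lia.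
    lia.
  apply: (chain (lo := n) (hi := m)).
  - move=> a b _ Hb Hbm; rewrite /pathg; have := ltn_ord b; lia.
  - by move=> a Ha; apply: (subsetP H); rewrite inE.
  - lia.
have S2 : (\sum_(Q : {set 'I_N}) sg Q *
    ([&& xN \in Q, y0 \in Q & ~~ connect (induced_rel (addE (pathg N.-1) n m) Q) xN y0] : nat)%:Z = 0)%R.
  have n1N : (n : nat).+1 < N by have := ltn_ord m; lia.
  pose n1 : 'I_N := Ordinal n1N.
  apply: (@corr_zero N [set xN; y0] [set j : 'I_N | (j <= n) || (m <= j)]).
  - apply/eqP => E.
    have := cardsT 'I_N; rewrite -E card_ord cards2; case: (xN != y0) => /=; lia.
  - apply/eqP => E.
    have Hy := in_setT n1.
    rewrite -E !inE /= in Hy; lia.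
  move=> Q; apply: cond_split => //.
    rewrite subUset !sub1set !inE /=; have := ltn_ord m; lia.
  move=> xQ yQ.
  rewrite (sym_connect_sym (induced_sym Q G1sym)).
  apply/idP/idP => [C|H].
    apply/subsetP => j; rewrite inE => Hj; apply/negPn/negP => jQ.
    have : y0 != j by apply/eqP => E; move: jQ; rewrite -E yQ.
    rewrite -val_eqE /= => yj.
    have yj' : (y0 : nat) < j by rewrite /=; lia.
    have : (xN : nat) < j.
      apply: (cut_lemma jQ yj' _ C) => a b aj.
      rewrite /G1 /addE /p /pathg -!val_eqE /=; lia.
    rewrite /=; have := ltn_ord j; lia.
  have nQ : n \in Q by apply: (subsetP H); rewrite inE leqnn.
  have mQ : m \in Q by apply: (subsetP H); rewrite inE leqnn orbT.
  have c1 : connect (induced_rel (addE (pathg N.-1) n m) Q) y0 n.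
    apply: (chain (lo := y0) (hi := n)).
    - move=> a b _ Hb Hbm; rewrite /addE /pathg; have := ltn_ord b; lia.
    - by move=> a Ha; apply: (subsetP H); rewrite inE; rewrite /= in Ha; lia.
    - rewrite /=; lia.
  have c2 : connect (induced_rel (addE (pathg N.-1) n m) Q) m xN.
    apply: (chain (lo := m) (hi := N.-1)).
    - move=> a b _ Hb Hbm; rewrite /addE /pathg; have := ltn_ord b; lia.
    - by move=> a Ha; apply: (subsetP H); rewrite inE; lia.
    - rewrite /=; have := ltn_ord m; lia.
  apply: connect_trans c1 (connect_trans (connect1 _) c2).
  by rewrite /induced_rel nQ mQ /addE !eqxx orbT.
by rewrite S1 S2 !subr0 mulr0 oppr0.
Qed.

Lemma cycle_adj_sym N : symmetric (@cycle_adj N).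
Proof. by move=> a b; rewrite /cycle_adj orbC. Qed.

Theorem mainTheorem9 (N : nat) (n m : 'I_N) :
  (4 <= N)%N -> n != m -> ~~ cycle_adj n m ->
  calC (chord_adj n m) = 0%R.
Proof.
move=> N4 nm nc.
have key : forall a b : 'I_N, (a : nat) < b -> ~~ cycle_adj a b ->
    ((a : nat).+1 < b) && ((0 < (a : nat)) || ((b : nat).+1 < N)).
  move=> a b ab; rewrite /cycle_adj /= !modS.
  have := ltn_ord a; have := ltn_ord b.
  move=> Hb Ha; case: ifP => H1; case: ifP => H2; lia.
case: (ltngtP n m) => [lt|gt|eq].
- by case/andP: (key n m lt nc) => h1 h2; apply: main_lt.
- have -> : chord_adj n m = chord_adj m n.
    apply: functional_extensionality => a.
    apply: functional_extensionality => b.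
    by rewrite /chord_adj cycle_adj_sym; case: (cycle_adj b a); case: (a == n);
       case: (a == m); case: (b == n); case: (b == m).
  rewrite cycle_adj_sym in nc.
  by case/andP: (key m n gt nc) => h1 h2; apply: main_lt.
- by move: nm; rewrite (val_inj eq) eqxx.
Qed.
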